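(* Let $\mathcal{B}=(X,P,B)$ be an ordinal ballean. Then $\mathcal{B}$ is either metrizable or cellular.
   Context: A ball structure is a triple $\mathcal{B}=(X,P,B)$ where $X,P$ are non-empty sets and for all $x\in X$, $\alpha\in P$, $B(x,\alpha)\subseteq X$ with $x\in B(x,\alpha)$ (the ball of radius $\alpha$ around $x$). Put $B^*(x,\alpha)=\{y\in X: x\in B(y,\alpha)\}$ and $B(A,\alpha)=\bigcup_{a\in A}B(a,\alpha)$ for $A\subseteq X$. A ball structure is a ballean if (1) for all $\alpha,\beta\in P$ there are $\alpha',\beta'\in P$ with $B(x,\alpha)\subseteq B^*(x,\alpha')$ and $B^*(x,\beta)\subseteq B(x,\beta')$ for all $x\in X$; and (2) for all $\alpha,\beta\in P$ there is $\gamma\in P$ with $B(B(x,\alpha),\beta)\subseteq B(x,\gamma)$ for all $x\in X$. For balleans $\mathcal{B}_1=(X_1,P_1,B_1)$, $\mathcal{B}_2=(X_2,P_2,B_2)$, a map $f:X_1\to X_2$ is a $\prec$-mapping if for every $\alpha\in P_1$ there is $\beta\in P_2$ with $f(B_1(x,\alpha))\subseteq B_2(f(x),\beta)$ for all $x\in X_1$; a bijection $f$ is an asymorphism if $f$ and $f^{-1}$ are $\prec$-mappings, and then the balleans are asymorphic. Two balleans on the same set are identified ($\mathcal{B}_1=\mathcal{B}_2$) if the identity map is an asymorphism. A metric space $(X,d)$ gives the metric ballean $(X,\mathbb{R}^+,B_d)$ with $B_d(x,r)=\{y: d(x,y)\le r\}$; a ballean is metrizable if it is asymorphic to some metric ballean.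 A ballean is connected if for all $x,y\in X$ there is $\alpha\in P$ with $y\in B(x,\alpha)$. Preorder $P$ by $\alpha\le\beta$ iff $B(x,\alpha)\subseteq B(x,\beta)$ for all $x\in X$. A connected ballean is ordinal if $P$ has a cofinal subset (i.e. a subset $P'$ such that every $\alpha\in P$ is $\le$ some element of $P'$) which is well-ordered by $\le$. For $\alpha\in P$, points $x,y$ are $\alpha$-path connected if there are $x=x_0,x_1,\dots,x_n=y$ with $x_{i+1}\in B(x_i,\alpha)$ for all $i$; let $B^{\Box}(x,\alpha)=\{y: x,y \text{ are } \alpha\text{-path connected}\}$. The cellularization is $\mathcal{B}^{\Box}=(X,P,B^{\Box})$, and $\mathcal{B}$ is cellular if $\mathcal{B}^{\Box}=\mathcal{B}$ (i.e. the identity map is an asymorphism between them). *)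

(* Defs.v *)
From Stdlib Require Import Reals Relations.
Open Scope R_scope.

Section Balleans.

(* A ball structure on X with radii P: [B x a y] means  y \in B(x, a). *)

Definition is_ball_structure {X P : Type} (B : X -> P -> X -> Prop) : Prop :=
  inhabited X /\ inhabited P /\ (forall (x : X) (a : P), B x a x).

Definition Bstar {X P : Type} (B : X -> P -> X -> Prop) (x : X) (a : P) (y : X) : Prop :=
  B y a x.

Definition Bset {X P : Type} (B : X -> P -> X -> Prop) (A : X -> Prop) (a : P) (y : X) : Prop :=
  exists z, A z /\ B z a y.

Definition is_ballean {X P : Type} (B : X -> P -> X -> Prop) : Prop :=
  is_ball_structure B /\
  (forall a b : P, exists a' b' : P, forall x : X,
      (forall y, B x a y -> Bstar B x a' y) /\
      (forall y, Bstar B x b y -> B x b' y)) /\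
  (forall a b : P, exists c : P, forall x : X,
      forall y, Bset B (B x a) b y -> B x c y).

Definition prec_mapping {X1 P1 X2 P2 : Type}
  (B1 : X1 -> P1 -> X1 -> Prop) (B2 : X2 -> P2 -> X2 -> Prop) (f : X1 -> X2) : Prop :=
  forall a : P1, exists b : P2, forall x y : X1, B1 x a y -> B2 (f x) b (f y).

Definition asymorphism {X1 P1 X2 P2 : Type}
  (B1 : X1 -> P1 -> X1 -> Prop) (B2 : X2 -> P2 -> X2 -> Prop) (f : X1 -> X2) : Prop :=
  exists g : X2 -> X1,
    (forall x, g (f x) = x) /\ (forall y, f (g y) = y) /\
    prec_mapping B1 B2 f /\ prec_mapping B2 B1 g.

Definition same_ballean {X P1 P2 : Type}
  (B1 : X -> P1 -> X -> Prop) (B2 : X -> P2 -> X -> Prop) : Prop :=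
  asymorphism B1 B2 (fun x => x).

Definition is_metric {Y : Type} (d : Y -> Y -> R) : Prop :=
  (forall x y, 0 <= d x y) /\
  (forall x y, d x y = 0 <-> x = y) /\
  (forall x y, d x y = d y x) /\
  (forall x y z, d x z <= d x y + d y z).

Definition nnreal : Type := { r : R | 0 <= r }.

Definition metric_ball {Y : Type} (d : Y -> Y -> R) (x : Y) (r : nnreal) (y : Y) : Prop :=
  d x y <= proj1_sig r.

Definition metrizable {X P : Type} (B : X -> P -> X -> Prop) : Prop :=
  exists (Y : Type) (d : Y -> Y -> R), is_metric d /\
    exists f : X -> Y, asymorphism B (metric_ball d) f.

Definition connected_ballean {X P : Type} (B : X -> P -> X -> Prop) : Prop :=
  forall x y : X, exists a : P, B x a y.

Definition rad_le {X P : Type} (B : X -> P -> X -> Prop) (a b : P) : Prop :=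
  forall x y, B x a y -> B x b y.

Definition well_ordered_by {P : Type} (le : P -> P -> Prop) (Q : P -> Prop) : Prop :=
  (forall a b, Q a -> Q b -> le a b \/ le b a) /\
  (forall a b, Q a -> Q b -> le a b -> le b a -> a = b) /\
  (forall a b c, Q a -> Q b -> Q c -> le a b -> le b c -> le a c) /\
  (forall a, Q a -> le a a) /\
  (forall S : P -> Prop, (forall a, S a -> Q a) -> (exists a, S a) ->
      exists m, S m /\ forall s, S s -> le m s).

Definition ordinal_ballean {X P : Type} (B : X -> P -> X -> Prop) : Prop :=
  connected_ballean B /\
  exists Q : P -> Prop,
    (forall a : P, exists b, Q b /\ rad_le B a b) /\
    well_ordered_by (rad_le B) Q.

(* alpha-path connectedness: a chain x = x0, ..., xn = y with x_{i+1} \in B(x_i, a) *)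
Definition Bbox {X P : Type} (B : X -> P -> X -> Prop) (x : X) (a : P) (y : X) : Prop :=
  clos_refl_trans_1n X (fun u v => B u a v) x y.

Definition cellular {X P : Type} (B : X -> P -> X -> Prop) : Prop :=
  same_ballean (Bbox B) B.

End Balleans.

(* Main.v *)
Require Import Defs.
From Stdlib Require Import Reals Relations.
From Stdlib Require Import Classical ClassicalEpsilon Lia Arith Wf_nat.
Local Open Scope nat_scope.

Lemma choice2 {A C D : Type} (Rl : A -> C -> D -> Prop) :
  (forall a b, exists c, Rl a b c) -> exists f : A -> C -> D, forall a b, Rl a b (f a b).
Proof.
  intros H. exists (fun a b => proj1_sig (constructive_indefinite_description _ (H a b))).
  intros a b. exact (proj2_sig (constructive_indefinite_description _ (H a b))).
Qed.

Lemma choice1 {A D : Type} (Rl : A -> D -> Prop) :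
  (forall a, exists c, Rl a c) -> exists f : A -> D, forall a, Rl a (f a).
Proof.
  intros H. exists (fun a => proj1_sig (constructive_indefinite_description _ (H a))).
  intros a. exact (proj2_sig (constructive_indefinite_description _ (H a))).
Qed.

Fixpoint sq {P : Type} (comp : P -> P -> P) (c s0 : P) (n : nat) : P :=
  match n with 0 => s0 | S n => comp c (sq comp c s0 n) end.

Lemma sq_mono X P (B : X -> P -> X -> Prop) comp c s0 :
  (forall x a, B x a x) ->
  (forall a b x y, Bset B (B x a) b y -> B x (comp a b) y) ->
  forall k m, k <= m -> forall x y, B x (sq comp c s0 k) y -> B x (sq comp c s0 m) y.
Proof.
  intros Hr Hc k m Hkm. induction Hkm; intros x y H; auto.
  simpl. apply Hc. exists x. split; [apply Hr | apply IHHkm; auto].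
Qed.

Lemma bbox_bound X P (B : X -> P -> X -> Prop) comp s0 a :
  (forall x a, B x a x) ->
  (forall a b x y, Bset B (B x a) b y -> B x (comp a b) y) ->
  forall x y, Bbox B x a y -> exists n, B x (sq comp a s0 n) y.
Proof.
  intros Hr Hc x y H. unfold Bbox in H. induction H.
  - exists 0. simpl. apply Hr.
  - destruct IHclos_refl_trans_1n as [n Hn]. exists (S n). simpl. apply Hc.
    exists y. split; auto.
Qed.

Definition Fw {X P : Type} (B : X -> P -> X -> Prop) (f : nat -> P) (w : nat) (x y : X) : Prop :=
  exists k, k < w /\ (B x (f k) y \/ B y (f k) x).

Inductive wchain {X P : Type} (B : X -> P -> X -> Prop) (f : nat -> P) : X -> X -> nat -> Prop :=
| wnil : forall x, wchain B f x x 0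
| wcons : forall x y z w n, 1 <= w -> Fw B f w x y -> wchain B f y z n -> wchain B f x z (w + n).

Lemma wchain_app {X P} (B : X -> P -> X -> Prop) f x y z n m :
  wchain B f x y n -> wchain B f y z m -> wchain B f x z (n + m).
Proof.
  intros H; revert z m; induction H; intros z' m H'; simpl; auto.
  rewrite <- Nat.add_assoc. eapply wcons; eauto.
Qed.

Lemma Fw_sym {X P} (B : X -> P -> X -> Prop) f w x y : Fw B f w x y -> Fw B f w y x.
Proof. intros [k [Hk [H|H]]]; exists k; split; auto. Qed.

Lemma wchain_rev {X P} (B : X -> P -> X -> Prop) f x y n :
  wchain B f x y n -> wchain B f y x n.
Proof.
  induction 1. constructor.
  rewrite Nat.add_comm. apply wchain_app with y; auto.
  replace w with (w + 0) by lia. apply wcons with x; auto. apply Fw_sym; auto. constructor.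
Qed.

Lemma wchain0 {X P} (B : X -> P -> X -> Prop) f x y : wchain B f x y 0 -> x = y.
Proof. intros H; inversion H; auto. lia. Qed.

Lemma wchain_bound X P (B : X -> P -> X -> Prop) f comp c s0 N :
  (forall x a, B x a x) ->
  (forall a b x y, Bset B (B x a) b y -> B x (comp a b) y) ->
  (forall k x y, k < N -> (B x (f k) y \/ B y (f k) x) -> B x c y) ->
  forall x y n, wchain B f x y n -> n <= N -> B x (sq comp c s0 n) y.
Proof.
  intros Hr Hc Hcb x y n H. induction H; intros Hn.
  - apply Hr.
  - apply sq_mono with (S n); auto. lia. simpl. apply Hc. exists y. split.
    + destruct H0 as [k [Hk Hk2]]. apply Hcb with k; auto. lia.
    + apply IHwchain. lia.
Qed.

Theorem theorem1 (X P : Type) (B : X -> P -> X -> Prop) :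
  is_ballean B -> ordinal_ballean B -> metrizable B \/ cellular B.
Proof.
  intros [[[x0] [[p0] Hr]] [Hsym Hcomp]] [Hconn [Q [HQcof HQwo]]].
  destruct (choice2 (fun a b c => forall x y, Bset B (B x a) b y -> B x c y) Hcomp)
    as [comp Hc0].
  assert (Hc : forall a b x y, Bset B (B x a) b y -> B x (comp a b) y).
  { intros a b x y; apply Hc0. }
  clear Hc0.
  destruct (classic (exists f : nat -> P, forall a, exists n, rad_le B a (f n)))
    as [[f Hf] | Hnf].
  - left.
    assert (Hstar : forall b, exists b', forall x y, B y b x -> B x b' y).
    { intros b. destruct (Hsym b b) as [a' [b' H]]. exists b'. intros x y Hy.
      apply (proj2 (H x)). exact Hy. }
    assert (Hjoin : forall a b, exists c, (forall x y, B x a y -> B x c y) /\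
                                          (forall x y, B x b y -> B x c y)).
    { intros a b. exists (comp a b). split; intros x y H; apply Hc.
      - exists y. split; auto.
      - exists x. split; auto. }
    assert (Fbound : forall N, exists c, forall k x y, k < N ->
                       (B x (f k) y \/ B y (f k) x) -> B x c y).
    { induction N.
      - exists p0. intros; lia.
      - destruct IHN as [c Hcc]. destruct (Hstar (f N)) as [b' Hb'].
        destruct (Hjoin c (f N)) as [c1 [H1 H2]].
        destruct (Hjoin c1 b') as [c2 [H3 H4]].
        exists c2. intros k x y Hk Hxy.
        destruct (Nat.eq_dec k N) as [->|Hne].
        + destruct Hxy as [Hxy|Hxy]; auto.
        + apply H3, H1. apply Hcc with k; auto. lia. }
    assert (Hex : forall x y, exists n, wchain B f x y n).
    { intros x y. destruct (Hconn x y) as [a Ha]. destruct (Hf a) as [k Hk].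
      exists (S k + 0). apply wcons with y. lia. exists k. split. lia. left. apply Hk; auto.
      constructor. }
    assert (dmin : exists dn : X -> X -> nat, forall x y,
               wchain B f x y (dn x y) /\ forall m, wchain B f x y m -> dn x y <= m).
    { apply (choice2 (fun x y n => wchain B f x y n /\ forall m, wchain B f x y m -> n <= m)). intros x y.
      destruct (dec_inh_nat_subset_has_unique_least_element (wchain B f x y)
                  (fun n => classic _) (Hex x y)) as [n [[H1 H2] _]].
      exists n; auto. }
    destruct dmin as [dn Hdn].
    exists X, (fun x y => INR (dn x y)). split.
    + split; [intros; apply pos_INR|]. split; [|split].
      * intros x y; split.
        -- intro H. apply (wchain0 B f). replace 0 with (dn x y).
           exact (proj1 (Hdn x y)). apply INR_eq. rewrite H. reflexivity.
        -- intro H; subst. assert (dn y y <= 0) by (apply (proj2 (Hdn y y)); constructor).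
           replace (dn y y) with 0 by lia. reflexivity.
      * intros x y. f_equal. apply Nat.le_antisymm; apply (proj2 (Hdn _ _));
          apply wchain_rev; apply (proj1 (Hdn _ _)).
      * intros x y z. rewrite <- plus_INR. apply le_INR. apply (proj2 (Hdn x z)).
        apply wchain_app with y; apply Hdn.
    + exists (fun x => x). exists (fun x => x). split; auto. split; auto. split.
      * intro a. destruct (Hf a) as [k Hk].
        exists (exist _ (INR (S k)) (pos_INR _)). intros x y Hxy.
        unfold metric_ball; cbn [proj1_sig]. apply le_INR. apply (proj2 (Hdn x y)).
        replace (S k) with (S k + 0) by lia. apply wcons with y. lia.
        exists k. split. lia. left. apply Hk. exact Hxy. constructor.
      * intros [r Hr0]. destruct (INR_unbounded r) as [N HN].
        destruct (Fbound N) as [c Hcb]. exists (sq comp c p0 N). intros x y Hxy.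
        unfold metric_ball in Hxy; cbn [proj1_sig] in Hxy.
        assert (Hlt : dn x y < N). { apply INR_lt. eapply Rle_lt_trans; eauto. }
        apply sq_mono with (dn x y); auto. lia.
        apply wchain_bound with f N; auto. apply Hdn. lia.
  - right. unfold cellular, same_ballean, asymorphism.
    exists (fun x => x). split; [auto | split; [auto | split]].
    + intro a.
      destruct (choice1 (fun a b => Q b /\ rad_le B a b) HQcof) as [q Hq].
      apply not_ex_all_not with (n := fun n => q (sq comp a p0 n)) in Hnf.
      apply not_all_ex_not in Hnf. destruct Hnf as [b Hb].
      exists (q b). intros x y Hxy.
      destruct (bbox_bound X P B comp p0 a Hr Hc x y Hxy) as [n Hn].
      destruct HQwo as [Htot _].
      destruct (Htot (q (sq comp a p0 n)) (q b) (proj1 (Hq _)) (proj1 (Hq b))) as [H1|H1].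
      * apply H1. apply (proj2 (Hq _)). exact Hn.
      * exfalso. apply Hb. exists n. intros u v Huv. apply H1. apply (proj2 (Hq b)). exact Huv.
    + intro a. exists a. intros x y H. unfold Bbox. econstructor 2; [exact H | constructor].
Qed.
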